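(* Let $W\in\mathbb{R}^{m\times n}$ have columns $W_1,\dots,W_n\in\mathbb{R}^m$, all nonzero, and let $F:=WW^\top$. For each $i$ define the fractional dimensionality $$D_i:=\frac{\|W_i\|^4}{\sum_{j=1}^n (W_i^\top W_j)^2},$$ and the spectral measure $\mu_i:=\sum_{e:\lambda_e>0} p_{i,e}\,\delta_{\lambda_e}$, where $\lambda_e$ runs over the distinct positive eigenvalues of $F$, $P_e$ is the orthogonal projector onto the $\lambda_e$-eigenspace of $F$, and $p_{i,e}:=\|P_eW_i\|^2/\|W_i\|^2$. Assume the capacity bound is saturated: $\sum_{i=1}^n D_i=\operatorname{rank}(W)=m$. Then for every feature $i$ the spectral measure $\mu_i$ is a single Dirac mass $\delta_{\lambda_k}$ at some eigenvalue $\lambda_k>0$ of $F$; equivalently, $FW_i=\lambda_kW_i$.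
   Context: $\delta_\lambda$ denotes the Dirac (point) probability measure at $\lambda$. For nonzero columns, the weights $p_{i,e}$ are nonnegative and sum to $1$, so $\mu_i$ is a finitely supported probability measure on $(0,\infty)$. *)

(* Defs.v *)
From HB Require Import structures.
From mathcomp Require Import all_boot all_order all_algebra.
Set Implicit Arguments. Unset Strict Implicit. Unset Printing Implicit Defensive.
Import Order.TTheory GRing.Theory Num.Theory.
Local Open Scope ring_scope.

Definition vdot (R : realFieldType) (m : nat) (u v : 'cV[R]_m) : R :=
  (u^T *m v) 0 0.
Definition nsq (R : realFieldType) (m : nat) (u : 'cV[R]_m) : R := vdot u u.

Definition frac_dim (R : realFieldType) (m n : nat) (W : 'M[R]_(m, n)) (i : 'I_n) : R :=
  nsq (col i W) ^+ 2 / \sum_(j < n) (vdot (col i W) (col j W)) ^+ 2.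

(* P is the orthogonal projector onto the subspace (row space) of U:
   P symmetric, idempotent, with the same range as U. *)
Definition orth_proj (R : realFieldType) (m : nat) (P U : 'M[R]_m) : Prop :=
  P^T = P /\ P *m P = P /\ (P == U)%MS.

Definition spec_weight (R : realFieldType) (m n : nat) (W : 'M[R]_(m, n))
  (P : 'M[R]_m) (i : 'I_n) : R :=
  nsq (P *m col i W) / nsq (col i W).

Definition spec_measure_dirac (R : realFieldType) (m n : nat) (W : 'M[R]_(m, n))
  (i : 'I_n) (lk : R) : Prop :=
  forall (l : R) (P : 'M[R]_m), 0 < l -> eigenvalue (W *m W^T) l ->
    orth_proj P (eigenspace (W *m W^T) l) ->
    spec_weight W P i = (l == lk)%:R.

(* Main.v *)
Require Import Defs.
From HB Require Import structures.
From mathcomp Require Import all_boot all_order all_algebra.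
From mathcomp Require Import ring.
Import Order.TTheory GRing.Theory Num.Theory.
Local Open Scope ring_scope.
Set Implicit Arguments. Unset Strict Implicit.

Lemma mxEB (R : realFieldType) p q (A B : 'M[R]_(p, q)) i j :
  (A - B) i j = A i j - B i j.
Proof. by rewrite !mxE. Qed.

Lemma mxEZ (R : realFieldType) p q (a : R) (A : 'M[R]_(p, q)) i j :
  (a *: A) i j = a * A i j.
Proof. by rewrite !mxE. Qed.

Lemma nsqE (R : realFieldType) k (u : 'cV[R]_k) :
  nsq u = \sum_j (u j 0) ^+ 2.
Proof. by rewrite /nsq /vdot mxE; apply: eq_bigr => j _; rewrite mxE expr2. Qed.

Lemma nsq_ge0 (R : realFieldType) k (u : 'cV[R]_k) : 0 <= nsq u.
Proof. by rewrite nsqE; apply: sumr_ge0 => j _; apply: sqr_ge0. Qed.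

Lemma nsq_eq0 (R : realFieldType) k (u : 'cV[R]_k) : nsq u = 0 -> u = 0.
Proof.
rewrite nsqE => h; apply/matrixP => j l; rewrite ord1 mxE.
have := psumr_eq0P (fun j _ => sqr_ge0 (u j 0)) h (erefl true) (i := j).
by move/eqP; rewrite sqrf_eq0 => /eqP.
Qed.

Lemma nsq0 (R : realFieldType) k : nsq (0 : 'cV[R]_k) = 0.
Proof. by rewrite /nsq /vdot trmx0 mul0mx mxE. Qed.

Lemma nsq_gt0 (R : realFieldType) k (u : 'cV[R]_k) : u != 0 -> 0 < nsq u.
Proof.
move=> h; rewrite lt_def nsq_ge0 andbT; apply/eqP => /nsq_eq0 e.
by rewrite e eqxx in h.
Qed.

Lemma quadF (R : realFieldType) m n (W : 'M[R]_(m, n)) (v : 'cV[R]_m) :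
  (v^T *m (W *m W^T) *m v) 0 0 = nsq (W^T *m v).
Proof. by rewrite /nsq /vdot trmx_mul trmxK !mulmxA. Qed.

Lemma sumsq (R : realFieldType) m n (W : 'M[R]_(m, n)) (i : 'I_n) :
  \sum_(j < n) (vdot (col i W) (col j W)) ^+ 2 = nsq (W^T *m col i W).
Proof.
rewrite nsqE; apply: eq_bigr => j _; rewrite /vdot; congr (_ ^+ 2).
rewrite !mxE; apply: eq_bigr => k _; rewrite !mxE mulrC.
by [].
Qed.

Lemma rowfree_col (R : realFieldType) m n (W : 'M[R]_(m, n)) :
  row_free W -> forall v : 'cV[R]_m, W^T *m v = 0 -> v = 0.
Proof.
move=> Hr v h.
have e : v^T *m W = (W^T *m v)^T by rewrite trmx_mul trmxK.
have : v^T *m W == 0 by rewrite e h trmx0.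
rewrite mulmx_free_eq0 // => /eqP h2.
by rewrite -[v]trmxK h2 trmx0.
Qed.

Lemma trE (R : realFieldType) (A : 'M[R]_1) : A^T 0 0 = A 0 0.
Proof. by rewrite mxE. Qed.

Definition bil (R : realFieldType) m (G : 'M[R]_m) (u v : 'cV[R]_m) : R :=
  (u^T *m G *m v) 0 0.

Lemma bilC (R : realFieldType) m (G : 'M[R]_m) u v :
  G^T = G -> bil G u v = bil G v u.
Proof.
move=> HG; rewrite /bil.
rewrite -[LHS](trE (u^T *m G *m v)).
by rewrite !trmx_mul trmxK HG mulmxA.
Qed.

Lemma bilBl (R : realFieldType) m (G : 'M[R]_m) u v w (t : R) :
  bil G (u - t *: v) w = bil G u w - t * bil G v w.
Proof.
rewrite /bil linearB /= linearZ /= !mulmxBl -!scalemxAl.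
by rewrite mxEB mxEZ.
Qed.

Lemma bilBr (R : realFieldType) m (G : 'M[R]_m) u v w (t : R) :
  G^T = G -> bil G w (u - t *: v) = bil G w u - t * bil G w v.
Proof.
move=> HG; rewrite bilC // bilBl (bilC _ u) // (bilC _ v) //.
Qed.

Lemma key (R : realFieldType) (N S q : R) :
  0 < S -> 0 < q ->
  q - N ^+ 2 / S = (S - (N / q) * N - (N / q) * (N - (N / q) * q)) * (q / S).
Proof.
move=> hS hq.
have S0 : S != 0 by rewrite gt_eqF.
have q0 : q != 0 by rewrite gt_eqF.
by field; rewrite S0 q0.
Qed.

Unset Implicit Arguments. Set Strict Implicit.

Theorem theorem1 (R : realFieldType) (m n : nat) (W : 'M[R]_(m, n))
  (Hnz : forall i : 'I_n, col i W != 0)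
  (Hrank : \rank W = m)
  (Hsat : \sum_(i < n) frac_dim W i = (\rank W)%:R) :
  forall i : 'I_n, exists lk : R,
    [/\ 0 < lk, eigenvalue (W *m W^T) lk,
        spec_measure_dirac W i lk
      & (W *m W^T) *m col i W = lk *: col i W].
Proof.
set F := W *m W^T.
have HF : F^T = F by rewrite /F trmx_mul trmxK.
have Hrf : row_free W by rewrite /row_free Hrank.
have HFu : F \in unitmx.
  rewrite -row_free_unit; apply: inj_row_free => v hv.
  have e : nsq (v *m W)^T = 0.
    rewrite /nsq /vdot trmxK trmx_mul mulmxA -(mulmxA v).
    by rewrite -/F hv mul0mx mxE.
  have := nsq_eq0 e => /eqP; rewrite -trmx0 (inj_eq trmx_inj).
  by rewrite mulmx_free_eq0 // => /eqP.
set G := invmx F.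
have HG : G^T = G by rewrite /G trmx_inv HF.
have HFG : F *m G = 1%:M by rewrite /G mulmxV.
have HGF : G *m F = 1%:M by rewrite /G mulVmx.
have bil_pd : forall v, bil G v v = nsq (W^T *m (G *m v)).
  move=> v; rewrite -quadF -/F /bil trmx_mul HG.
  by rewrite -(mulmxA _ G F) -(mulmxA _ (G *m F)) HGF mul1mx mulmxA.
have bil_ge0 : forall v, 0 <= bil G v v by move=> v; rewrite bil_pd nsq_ge0.
have bil_eq0 : forall v, bil G v v = 0 -> v = 0.
  move=> v; rewrite bil_pd => /nsq_eq0 /(rowfree_col Hrf) h.
  by rewrite -[v]mul1mx -HFG -mulmxA h mulmx0.
have bil_gt0 : forall v, v != 0 -> 0 < bil G v v.
  move=> v hv; rewrite lt_def bil_ge0 andbT; apply/eqP => /bil_eq0 e.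
  by rewrite e eqxx in hv.
pose q i := bil G (col i W) (col i W).
have Hfd : forall i, frac_dim W i <= q i /\
   (frac_dim W i = q i -> F *m col i W = (nsq (col i W) / q i) *: col i W).
  move=> i; set x := col i W.
  set N := nsq x; set S := nsq (W^T *m x); set t := N / q i.
  have hS : 0 < S.
    apply: nsq_gt0; apply/eqP => /(rowfree_col Hrf) h.
    by move: (Hnz i); rewrite -/x h eqxx.
  have hq : 0 < q i by apply: bil_gt0; apply: Hnz.
  have hax : bil G (F *m x) x = N.
    by rewrite /bil trmx_mul HF -(mulmxA _ F G) HFG mulmx1.
  have hxa : bil G x (F *m x) = N by rewrite bilC.
  have haa : bil G (F *m x) (F *m x) = S.
    rewrite /bil trmx_mul HF -(mulmxA _ F G) HFG mulmx1 /S -quadF.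
    by rewrite mulmxA.
  have hc : bil G (F *m x - t *: x) (F *m x - t *: x) =
            S - t * N - t * (N - t * q i).
    by rewrite bilBl !bilBr // haa hax hxa.
  have hfd : frac_dim W i = N ^+ 2 / S by rewrite /frac_dim sumsq.
  have hk := key N hS hq; rewrite -/t -hc in hk.
  split.
    rewrite hfd -subr_ge0 hk; apply: mulr_ge0 => //.
    by apply: divr_ge0; apply: ltW.
  move=> he; move: hk; rewrite -hfd he subrr => /esym /eqP.
  rewrite mulf_eq0 (negbTE (mulf_neq0 (negbT (gt_eqF hq)) (invr_neq0 (negbT (gt_eqF hS))))) orbF.
  by move=> /eqP /bil_eq0 /eqP; rewrite subr_eq0 => /eqP.
have Heq : forall i, frac_dim W i = q i.
  have hsq : \sum_(i < n) q i = (\rank W)%:R.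
    rewrite Hrank -(mxtrace1 R m) -HFG /F -mulmxA mxtrace_mulC.
    rewrite /mxtrace; apply: eq_bigr => i _; rewrite /q /bil tr_col -row_mul.
    by rewrite !mxE; apply: eq_bigr => k _; rewrite !mxE.
  have hs0 : \sum_(i < n) (q i - frac_dim W i) = 0.
    by rewrite sumrB hsq Hsat subrr.
  move=> i; apply/eqP; rewrite eq_sym -subr_eq0; apply/eqP.
  apply: (psumr_eq0P _ hs0) => // j _.
  by rewrite subr_ge0; case: (Hfd j).
move=> i; set x := col i W.
have hN : 0 < nsq x by apply: nsq_gt0; apply: Hnz.
have hq : 0 < q i by apply: bil_gt0; apply: Hnz.
set t := nsq x / q i.
have Hev : F *m x = t *: x by case: (Hfd i) => _ /(_ (Heq i)).
have HevT : x^T *m F = t *: x^T by rewrite -HF -trmx_mul Hev linearZ.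
have hxT : x^T != 0.
  apply: contra (Hnz i) => /eqP h; by rewrite -/x -[x]trmxK h trmx0.
exists t; split => //.
- by apply: divr_gt0.
- by apply/eigenvalueP; exists x^T.
- move=> l P hl _ [HPs [HPP /andP [HPE HEP]]].
  rewrite /spec_weight -/x.
  case: (eqVneq l t) => [e | hne].
    have hsub : (x^T <= P)%MS.
      by apply: submx_trans HEP; apply/eigenspaceP; rewrite e.
    case/submxP: hsub => D hD.
    have hxP : x^T *m P = x^T by rewrite hD -mulmxA HPP.
    have -> : P *m x = x by rewrite -HPs -[x]trmxK -trmx_mul hxP.
    by rewrite divff // gt_eqF.
  have HPF : P *m F = l *: P by apply/eigenspaceP.
  have hPx : P *m x = 0.
    have : (l - t) *: (P *m x) = 0.
      by rewrite scalerBl scalemxAl -HPF -mulmxA Hev -scalemxAr subrr.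
    by move/eqP; rewrite scaler_eq0 subr_eq0 (negbTE hne) => /eqP.
  by rewrite hPx nsq0 mul0r.
Qed.
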